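(* $\gamma^{L-ID}(\mathcal{S})=\frac{3}{11}$: every local identifying code in the square grid has density at least $3/11$, and there is a local identifying code in the square grid of density $3/11$.
   Context: The square grid $\mathcal{S}$ has vertex set $\mathbb{Z}^2$, with $\mathbf{u},\mathbf{v}$ adjacent iff $\mathbf{u}-\mathbf{v}\in\{(\pm1,0),(0,\pm1)\}$. For a nonempty $C\subseteq\mathbb{Z}^2$ and vertex $\mathbf{u}$, $I(\mathbf{u})=N[\mathbf{u}]\cap C$ where $N[\mathbf{u}]$ is the closed neighbourhood. $C$ is a local identifying code if $I(\mathbf{u})\ne\emptyset$ for all $\mathbf{u}$ and $I(\mathbf{u})\ne I(\mathbf{v})$ for all adjacent $\mathbf{u},\mathbf{v}$. The density of $C$ is $D(C)=\limsup_{n\to\infty}|C\cap Q_n|/|Q_n|$ with $Q_n=\{(i,j)\in\mathbb{Z}^2:|i|\le n,|j|\le n\}$. $\gamma^{L-ID}(G)$ denotes the smallest density of a local identifying code in $G$. *)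

(* Defs.v *)
From Stdlib Require Import Reals ZArith List.
From Coquelicot Require Import Coquelicot.
Open Scope R_scope.

Definition vertex := (Z * Z)%type.

Definition adj (u v : vertex) : Prop :=
  let dx := (fst u - fst v)%Z in let dy := (snd u - snd v)%Z in
  (dx = 1%Z /\ dy = 0%Z) \/ (dx = (-1)%Z /\ dy = 0%Z) \/
  (dx = 0%Z /\ dy = 1%Z) \/ (dx = 0%Z /\ dy = (-1)%Z).

Definition closed_nbhd (u w : vertex) : Prop := w = u \/ adj u w.

Definition code := vertex -> bool.

Definition Iset (C : code) (u : vertex) (w : vertex) : Prop :=
  closed_nbhd u w /\ C w = true.

Definition local_identifying_code (C : code) : Prop :=
  (exists w, C w = true) /\
  (forall u, exists w, Iset C u w) /\
  (forall u v, adj u v -> ~ (forall w, Iset C u w <-> Iset C v w)).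

(* Q_n = {(i,j) : |i| <= n, |j| <= n} enumerated as a list *)
Definition Zrange (n : nat) : list Z :=
  map (fun k => (Z.of_nat k - Z.of_nat n)%Z) (seq 0 (2 * n + 1)).
Definition Qn (n : nat) : list vertex := list_prod (Zrange n) (Zrange n).

Definition count_in_Qn (C : code) (n : nat) : nat :=
  length (filter C (Qn n)).

Definition density (C : code) : Rbar :=
  LimSup_seq (fun n => INR (count_in_Qn C n) / INR (length (Qn n))).

(* Main.v *)
Require Import Defs.
From Stdlib Require Import Reals.
From Coquelicot Require Import Coquelicot.
From Stdlib Require Import ZArith List Bool Lia Lra Psatz FunctionalExtensionality.
Import ListNotations.
Open Scope Z_scope.


Definition vadd (u v : vertex) : vertex := (fst u + fst v, snd u + snd v).
Definition cZ (b:bool) : Z := if b then 1 else 0.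
Definition Ic0 (g : vertex -> bool) : Z :=
  cZ (g (0,0)) + cZ (g (1,0)) + cZ (g (-1,0)) + cZ (g (0,1)) + cZ (g (0,-1)).
Definition kn0 (g : vertex -> bool) : Z :=
  cZ (g (1,0)) + cZ (g (-1,0)) + cZ (g (0,1)) + cZ (g (0,-1)).
Definition T0 (g : vertex -> bool) : Z := if g (0,0) && Z.eqb (kn0 g) 1 then 1 else 0.
Definition w0 (g : vertex -> bool) : Z := 60 / Ic0 g.
Definition shiftf (g : vertex -> bool) (d : vertex) : vertex -> bool := fun u => g (vadd d u).
Definition isO (d : vertex) : bool := Z.eqb (fst d) 0 && Z.eqb (snd d) 0.
Definition vneg (d : vertex) : vertex := (- fst d, - snd d).
Definition A0 (d : vertex) (g : vertex -> bool) : Z :=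
  (if isO d then 220 * cZ (g (0,0)) + 10 * T0 g else 0)
  - cZ (g (vneg d)) * w0 g
  - (if isO d then 0 else 10 * cZ (g (vneg d)) * T0 g).
Definition Phi0 (g : vertex -> bool) : Z :=
  A0 (0,0) g + A0 (1,0) (shiftf g (1,0)) + A0 (-1,0) (shiftf g (-1,0))
  + A0 (0,1) (shiftf g (0,1)) + A0 (0,-1) (shiftf g (0,-1)).
Definition Psi0 (g : vertex -> bool) : Z :=
  A0 (0,0) g + A0 (1,0) g + A0 (-1,0) g + A0 (0,1) g + A0 (0,-1) g.
Definition dom (g : vertex -> bool) (u : vertex) : bool :=
  g u || g (vadd u (1,0)) || g (vadd u (-1,0)) || g (vadd u (0,1)) || g (vadd u (0,-1)).
(* separation for edge (u, u+e): the six other neighbours *)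
Definition sepx (g : vertex -> bool) (u : vertex) : bool :=
  g (vadd u (-1,0)) || g (vadd u (0,1)) || g (vadd u (0,-1))
  || g (vadd u (2,0)) || g (vadd u (1,1)) || g (vadd u (1,-1)).
Definition sepy (g : vertex -> bool) (u : vertex) : bool :=
  g (vadd u (0,-1)) || g (vadd u (1,0)) || g (vadd u (-1,0))
  || g (vadd u (0,2)) || g (vadd u (1,1)) || g (vadd u (-1,1)).
Definition valid0 (g : vertex -> bool) : bool :=
  dom g (0,0) && dom g (1,0) && dom g (-1,0) && dom g (0,1) && dom g (0,-1)
  && sepx g (0,0) && sepx g (-1,0) && sepy g (0,0) && sepy g (0,-1).
Definition pts : list vertex :=
  [(0,0);(1,0);(-1,0);(0,1);(0,-1);(2,0);(-2,0);(0,2);(0,-2);(1,1);(1,-1);(-1,1);(-1,-1)].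
Fixpoint lk (ps : list vertex) (bs : list bool) (p : vertex) : bool :=
  match ps, bs with
  | q :: ps', b :: bs' => if Z.eqb (fst p) (fst q) && Z.eqb (snd p) (snd q) then b else lk ps' bs' p
  | _, _ => false
  end.
Fixpoint allbs (n : nat) : list (list bool) :=
  match n with O => [[]] | S n' => let r := allbs n' in map (cons true) r ++ map (cons false) r end.
Definition checkA (g : vertex -> bool) : bool :=
  forallb (fun d => Z.leb (Z.abs (A0 d g)) 300) [(0,0);(1,0);(-1,0);(0,1);(0,-1)].
Definition check1 (bs : list bool) : bool :=
  let g := lk pts bs in
  checkA g && (negb (valid0 g) || (Z.leb 0 (Phi0 g) && Z.eqb (Psi0 g) (220 * cZ (g (0,0)) - 60))).
Lemma check_all : forallb check1 (allbs 13) = true.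
Proof. vm_compute. reflexivity. Qed.



Fixpoint inb (p : vertex) (l : list vertex) : bool :=
  match l with [] => false | q :: l' => (Z.eqb (fst p) (fst q) && Z.eqb (snd p) (snd q)) || inb p l' end.
Definition agree (g h : vertex -> bool) := forall p, inb p pts = true -> g p = h p.

Ltac rw_agree H g :=
  repeat match goal with |- context [g ?p] => rewrite (H p) by reflexivity end.

Lemma Phi0_cong g h : agree g h -> Phi0 g = Phi0 h.
Proof. intro H. unfold Phi0, A0, T0, w0, Ic0, kn0, shiftf. rw_agree H g. reflexivity. Qed.
Lemma Psi0_cong g h : agree g h -> Psi0 g = Psi0 h.
Proof. intro H. unfold Psi0, A0, T0, w0, Ic0, kn0, shiftf. rw_agree H g. reflexivity. Qed.
Lemma valid0_cong g h : agree g h -> valid0 g = valid0 h.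
Proof. intro H. unfold valid0, dom, sepx, sepy. rw_agree H g. reflexivity. Qed.
Lemma checkA_cong g h : agree g h -> checkA g = checkA h.
Proof. intro H. unfold checkA, forallb, A0, T0, w0, Ic0, kn0. rw_agree H g. reflexivity. Qed.
Lemma g00_cong g h : agree g h -> g (0,0) = h (0,0).
Proof. intro H. apply H. reflexivity. Qed.

Lemma allbs_in : forall n l, length l = n -> In l (allbs n).
Proof.
  induction n; intros l Hl; destruct l as [|b l]; simpl in *; try discriminate; auto.
  apply in_or_app. injection Hl as Hl. destruct b; [left|right]; apply in_map; auto.
Qed.

Lemma agree_lk g : agree g (lk pts (map g pts)).
Proof.
  intros [x y] Hp. unfold pts in Hp. simpl in Hp.
  repeat (match type of Hp with
    | (?a || ?b)%bool = true => apply orb_prop in Hp; destruct Hp as [Hp|Hp]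
    end);
  try (apply andb_prop in Hp; destruct Hp as [H1 H2]; apply Z.eqb_eq in H1; apply Z.eqb_eq in H2; subst; reflexivity).
  discriminate.
Qed.

Lemma local_all g : valid0 g = true ->
  checkA g = true /\ 0 <= Phi0 g /\ Psi0 g = 220 * cZ (g (0,0)) - 60.
Proof.
  intro Hv.
  pose proof (agree_lk g) as Ha.
  set (h := lk pts (map g pts)) in *.
  assert (Hc : check1 (map g pts) = true).
  { pose proof check_all as C. rewrite forallb_forall in C. apply C. apply allbs_in.
    rewrite length_map. reflexivity. }
  unfold check1 in Hc. fold h in Hc.
  rewrite <- (valid0_cong _ _ Ha), Hv in Hc. simpl in Hc.
  rewrite <- (checkA_cong _ _ Ha), <- (Phi0_cong _ _ Ha), <- (Psi0_cong _ _ Ha), <- (g00_cong _ _ Ha) in Hc.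
  try rewrite orb_false_r in Hc. idtac.
  apply andb_prop in Hc as [H1 H2]. apply andb_prop in H2 as [H2 H3].
  split; [exact H1|]. split; [apply Z.leb_le; exact H2 | apply Z.eqb_eq; exact H3].
Qed.
Lemma checkA_all g : checkA g = true.
Proof.
  pose proof (agree_lk g) as Ha.
  assert (Hc : check1 (map g pts) = true).
  { pose proof check_all as C. rewrite forallb_forall in C. apply C. apply allbs_in.
    rewrite length_map. reflexivity. }
  unfold check1 in Hc. rewrite (checkA_cong _ _ Ha). apply andb_prop in Hc as [H _]. exact H.
Qed.


Ltac kill := match goal with H : ?C (?a,?b) = true, H2 : ?C (?c,?d) = false |- _ =>
  let E := fresh in assert (E: (a,b) = (c,d)) by (f_equal; lia); (try rewrite E in H); congruence end.
Ltac nbh := solve [left; f_equal; lia | right; unfold adj; simpl; lia].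
Ltac split_nbhd Hn :=
  destruct Hn as [Hn|Hn];
  [injection Hn as ? ? | unfold adj in Hn; simpl in Hn;
     destruct Hn as [[? ?]|[[? ?]|[[? ?]|[? ?]]]]].

Lemma dom_of (C : code) : local_identifying_code C -> forall u, dom C u = true.
Proof.
  intros [_ [Hd _]] [x y]. destruct (Hd (x,y)) as [[wx wy] [Hn Hw]].
  unfold dom, vadd; simpl. apply Bool.not_false_iff_true. intro Hf.
  repeat rewrite orb_false_iff in Hf.
  destruct Hf as [[[[H1 H2] H3] H4] H5].
  unfold closed_nbhd in Hn. split_nbhd Hn; subst; kill.
Qed.

Lemma sepx_of (C : code) : local_identifying_code C -> forall u, sepx C u = true.
Proof.
  intros [_ [_ Hs]] [x y]. apply Bool.not_false_iff_true. intro Hf.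
  unfold sepx, vadd in Hf; simpl in Hf.
  repeat rewrite orb_false_iff in Hf.
  destruct Hf as [[[[[H1 H2] H3] H4] H5] H6].
  apply (Hs (x,y) (x+1,y)). { unfold adj; simpl; lia. }
  intros [wx wy]; unfold Iset, closed_nbhd; split; intros [Hn Hw]; (split; [|exact Hw]);
  split_nbhd Hn; simpl in *; first [kill | nbh].
Qed.

Lemma sepy_of (C : code) : local_identifying_code C -> forall u, sepy C u = true.
Proof.
  intros [_ [_ Hs]] [x y]. apply Bool.not_false_iff_true. intro Hf.
  unfold sepy, vadd in Hf; simpl in Hf.
  repeat rewrite orb_false_iff in Hf.
  destruct Hf as [[[[[H1 H2] H3] H4] H5] H6].
  apply (Hs (x,y) (x,y+1)). { unfold adj; simpl; lia. }
  intros [wx wy]; unfold Iset, closed_nbhd; split; intros [Hn Hw]; (split; [|exact Hw]);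
  split_nbhd Hn; simpl in *; first [kill | nbh].
Qed.

Lemma vadd_assoc a b c : vadd a (vadd b c) = vadd (vadd a b) c.
Proof. destruct a, b, c; unfold vadd; simpl; f_equal; ring. Qed.

Lemma valid_shift (C : code) : local_identifying_code C -> forall c, valid0 (shiftf C c) = true.
Proof.
  intros HC c.
  assert (Hd : forall u, dom (shiftf C c) u = true).
  { intro u. unfold dom, shiftf. rewrite !vadd_assoc. apply (dom_of C HC). }
  assert (Hx : forall u, sepx (shiftf C c) u = true).
  { intro u. unfold sepx, shiftf. rewrite !vadd_assoc. apply (sepx_of C HC). }
  assert (Hy : forall u, sepy (shiftf C c) u = true).
  { intro u. unfold sepy, shiftf. rewrite !vadd_assoc. apply (sepy_of C HC). }
  unfold valid0. rewrite !Hd, !Hx, !Hy. reflexivity.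
Qed.


Definition sumL {A} (f : A -> Z) (l : list A) : Z := fold_right (fun a acc => f a + acc) 0 l.
Lemma sumL_app {A} (f : A -> Z) l1 l2 : sumL f (l1 ++ l2) = sumL f l1 + sumL f l2.
Proof. induction l1; simpl; [|rewrite IHl1]; ring. Qed.
Lemma sumL_map {A B} (f : B -> Z) (g : A -> B) l : sumL f (map g l) = sumL (fun x => f (g x)) l.
Proof. induction l; simpl; [|rewrite IHl]; reflexivity. Qed.
Lemma sumL_ext {A} (f g : A -> Z) l : (forall x, f x = g x) -> sumL f l = sumL g l.
Proof. intro H; induction l; simpl; [|rewrite IHl, H]; reflexivity. Qed.
Lemma sumL_plus {A} (f g : A -> Z) l : sumL (fun x => f x + g x) l = sumL f l + sumL g l.
Proof. induction l; simpl; [|rewrite IHl]; ring. Qed.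
Lemma sumL_const {A} (c : Z) (l : list A) : sumL (fun _ => c) l = c * Z.of_nat (length l).
Proof. induction l; simpl length; [simpl; ring|]. rewrite Nat2Z.inj_succ. simpl. rewrite IHl. ring. Qed.
Lemma sumL_le {A} (f g : A -> Z) l : (forall x, f x <= g x) -> sumL f l <= sumL g l.
Proof. intro H; induction l; simpl; [lia|]. specialize (H a). lia. Qed.
Lemma sumL_abs {A} (f : A -> Z) l B : (forall x, Z.abs (f x) <= B) -> Z.abs (sumL f l) <= B * Z.of_nat (length l).
Proof. intro H; induction l; simpl length; [simpl; lia|]. rewrite Nat2Z.inj_succ. simpl.
  specialize (H a). lia. Qed.
Lemma sumL_prod (f : vertex -> Z) l1 l2 :
  sumL f (list_prod l1 l2) = sumL (fun i => sumL (fun j => f (i,j)) l2) l1.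
Proof. induction l1; simpl; [reflexivity|]. rewrite sumL_app, sumL_map, IHl1. reflexivity. Qed.

Lemma tele_seq (H : nat -> Z) len : forall s,
  sumL (fun k => H (S k)) (seq s len) = sumL H (seq s len) + H (s + len)%nat - H s.
Proof. induction len; intro s; simpl. { rewrite Nat.add_0_r. ring. }
  rewrite IHlen. replace (s + S len)%nat with (S s + len)%nat by lia. ring. Qed.

Lemma Zrange_len m : length (Zrange m) = (2 * m + 1)%nat.
Proof. unfold Zrange. rewrite length_map, length_seq. reflexivity. Qed.

Lemma teleZ (G : Z -> Z) m :
  sumL (fun i => G (i + 1)) (Zrange m) = sumL G (Zrange m) + G (Z.of_nat m + 1) - G (- Z.of_nat m).
Proof.
  unfold Zrange. rewrite !sumL_map.
  pose proof (tele_seq (fun k => G (Z.of_nat k - Z.of_nat m)) (2*m+1) 0) as T.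
  cbv beta in T.
  rewrite (sumL_ext (fun x => G (Z.of_nat x - Z.of_nat m + 1)) (fun k => G (Z.of_nat (S k) - Z.of_nat m))).
  2:{ intro x. f_equal. lia. }
  rewrite T. f_equal. f_equal; f_equal; lia.
Qed.

Lemma shift_p1 (G : Z -> Z) m K : (forall i, Z.abs (G i) <= K) ->
  sumL (fun i => G (i + 1)) (Zrange m) <= sumL G (Zrange m) + 2 * K.
Proof. intro H. rewrite teleZ. pose proof (H (Z.of_nat m + 1)); pose proof (H (- Z.of_nat m)). lia. Qed.
Lemma shift_m1 (G : Z -> Z) m K : (forall i, Z.abs (G i) <= K) ->
  sumL (fun i => G (i + -1)) (Zrange m) <= sumL G (Zrange m) + 2 * K.
Proof. intro H. pose proof (teleZ (fun i => G (i + -1)) m) as T.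
  rewrite (sumL_ext (fun i => G (i + 1 + -1)) G) in T by (intro; f_equal; ring).
  pose proof (H (Z.of_nat m + 1 + -1)); pose proof (H (- Z.of_nat m + -1)). lia. Qed.

Definition LZ (m : nat) : Z := 2 * Z.of_nat m + 1.

Lemma shift_le (f : vertex -> Z) B m d :
  (forall v, Z.abs (f v) <= B) -> In d [(1,0);(-1,0);(0,1);(0,-1)] ->
  sumL (fun c => f (vadd c d)) (Qn m) <= sumL f (Qn m) + 2 * B * LZ m.
Proof.
  intros HB Hd. unfold Qn. rewrite !sumL_prod.
  assert (HF : forall i, Z.abs (sumL (fun j => f (i,j)) (Zrange m)) <= B * LZ m).
  { intro i. pose proof (sumL_abs (fun j => f (i,j)) (Zrange m) B (fun x => HB _)).
    rewrite Zrange_len in H. replace (Z.of_nat (2*m+1)) with (LZ m) in H by (unfold LZ; lia). exact H. }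
  assert (HL : Z.of_nat (length (Zrange m)) = LZ m) by (rewrite Zrange_len; unfold LZ; lia).
  simpl in Hd; destruct Hd as [<-|[<-|[<-|[<-|[]]]]]; unfold vadd; cbn [fst snd].
  - rewrite (sumL_ext _ (fun i => (fun i => sumL (fun j => f (i, j)) (Zrange m)) (i + 1))).
    2:{ intro i. apply sumL_ext. intro j. rewrite Z.add_0_r. reflexivity. }
    pose proof (shift_p1 (fun i => sumL (fun j => f (i, j)) (Zrange m)) m _ HF). cbv beta in *. rewrite <- Z.mul_assoc. exact H.
  - rewrite (sumL_ext _ (fun i => (fun i => sumL (fun j => f (i, j)) (Zrange m)) (i + -1))).
    2:{ intro i. apply sumL_ext. intro j. rewrite Z.add_0_r. reflexivity. }
    pose proof (shift_m1 (fun i => sumL (fun j => f (i, j)) (Zrange m)) m _ HF). cbv beta in *. rewrite <- Z.mul_assoc. exact H.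
  - eapply Z.le_trans.
    { apply sumL_le. intro i. rewrite Z.add_0_r.
      apply (shift_p1 (fun j => f (i,j)) m B (fun j => HB _)). }
    rewrite sumL_plus, sumL_const, HL. nia.
  - eapply Z.le_trans.
    { apply sumL_le. intro i. rewrite Z.add_0_r.
      apply (shift_m1 (fun j => f (i,j)) m B (fun j => HB _)). }
    rewrite sumL_plus, sumL_const, HL. nia.
Qed.

Lemma sumL_affine {A} (f : A -> Z) a b l : sumL (fun v => a * f v + b) l = a * sumL f l + b * Z.of_nat (length l).
Proof. induction l; simpl length; [simpl; ring|]. rewrite Nat2Z.inj_succ. simpl. rewrite IHl. ring. Qed.

Definition AA (C : code) (d v : vertex) : Z := A0 d (shiftf C v).
Definition Phi (C : code) (c : vertex) : Z :=
  AA C (0,0) c + AA C (1,0) (vadd c (1,0)) + AA C (-1,0) (vadd c (-1,0))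
  + AA C (0,1) (vadd c (0,1)) + AA C (0,-1) (vadd c (0,-1)).

Lemma shiftf_shiftf (C : code) c d : shiftf C (vadd c d) = shiftf (shiftf C c) d.
Proof. apply functional_extensionality. intro u. unfold shiftf. rewrite vadd_assoc. reflexivity. Qed.

Lemma Phi_eq C c : Phi C c = Phi0 (shiftf C c).
Proof. unfold Phi, Phi0, AA. rewrite !shiftf_shiftf. reflexivity. Qed.

Lemma AA_bound C d v : In d [(0,0);(1,0);(-1,0);(0,1);(0,-1)] -> Z.abs (AA C d v) <= 300.
Proof.
  intro Hd. pose proof (checkA_all (shiftf C v)) as H. unfold checkA in H.
  rewrite forallb_forall in H. specialize (H d Hd). apply Z.leb_le in H. exact H.
Qed.

Lemma count_eq C m : Z.of_nat (count_in_Qn C m) = sumL (fun v => cZ (C v)) (Qn m).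
Proof. unfold count_in_Qn. induction (Qn m) as [|a l IH]; [reflexivity|].
  change (sumL (fun v => cZ (C v)) (a :: l)) with (cZ (C a) + sumL (fun v => cZ (C v)) l).
  rewrite <- IH. cbn [filter]. destruct (C a); cbn [length]; unfold cZ; lia. Qed.

Lemma lenQ m : Z.of_nat (length (Qn m)) = LZ m * LZ m.
Proof. assert (E := length_prod (Zrange m) (Zrange m)). unfold Qn, vertex. rewrite E, Zrange_len, Nat2Z.inj_mul. unfold LZ. lia. Qed.

Lemma lower_count C : local_identifying_code C -> forall m,
  3 * (LZ m * LZ m) - 120 * LZ m <= 11 * Z.of_nat (count_in_Qn C m).
Proof.
  intros HC m.
  assert (H0 : 0 <= sumL (Phi C) (Qn m)).
  { assert (sumL (fun _ : vertex => 0) (Qn m) <= sumL (Phi C) (Qn m)).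
    { apply sumL_le. intro c. rewrite Phi_eq. apply (proj1 (proj2 (local_all _ (valid_shift C HC c)))). }
    rewrite sumL_const in H. lia. }
  unfold Phi in H0. rewrite !sumL_plus in H0.
  assert (Hb : forall d, In d [(1,0);(-1,0);(0,1);(0,-1)] ->
     sumL (fun c => AA C d (vadd c d)) (Qn m) <= sumL (AA C d) (Qn m) + 2 * 300 * LZ m).
  { intros d Hd. apply shift_le; auto. intro v. apply AA_bound. simpl in *; tauto. }
  pose proof (Hb (1,0) ltac:(simpl; tauto)).
  pose proof (Hb (-1,0) ltac:(simpl; tauto)).
  pose proof (Hb (0,1) ltac:(simpl; tauto)).
  pose proof (Hb (0,-1) ltac:(simpl; tauto)).
  assert (HP : sumL (AA C (0,0)) (Qn m) + sumL (AA C (1,0)) (Qn m) + sumL (AA C (-1,0)) (Qn m)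
     + sumL (AA C (0,1)) (Qn m) + sumL (AA C (0,-1)) (Qn m) = 220 * Z.of_nat (count_in_Qn C m) - 60 * (LZ m * LZ m)).
  { rewrite <- !sumL_plus. rewrite count_eq, <- lenQ.
    rewrite (sumL_ext _ (fun v => 220 * cZ (C v) + (-60))).
    - rewrite sumL_affine. ring.
    - intro v. pose proof (proj2 (proj2 (local_all _ (valid_shift C HC v)))) as E.
      unfold Psi0 in E. unfold AA. rewrite E. unfold shiftf. replace (vadd v (0,0)) with v by (destruct v; unfold vadd; simpl; f_equal; ring). ring. }
  lia.
Qed.


Lemma lic_of (C : code) : (exists w, C w = true) -> (forall u, dom C u = true) ->
  (forall u, sepx C u = true) -> (forall u, sepy C u = true) -> local_identifying_code C.
Proof.
  intros Hw Hd Hx Hy. split; [exact Hw|]. split.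
  - intros [x y]. specialize (Hd (x,y)). unfold dom, vadd in Hd; simpl in Hd.
    repeat rewrite orb_true_iff in Hd.
    destruct Hd as [[[[H|H]|H]|H]|H]; eexists; (split; [|exact H]); unfold closed_nbhd; nbh.
  - intros [x y] [vx vy] Hadj Hiff. unfold adj in Hadj; simpl in Hadj.
    destruct Hadj as [[? ?]|[[? ?]|[[? ?]|[? ?]]]].
    + specialize (Hx (vx,vy)) as Hs. unfold sepx, vadd in Hs; simpl in Hs.
      repeat rewrite orb_true_iff in Hs.
      destruct Hs as [[[[[Hw'|Hw']|Hw']|Hw']|Hw']|Hw'];
      match type of Hw' with ?C (?a,?b) = true =>
        destruct (Hiff (a,b)) as [I1 I2];
        first [ assert (K : Iset C (x,y) (a,b)) by (split; [unfold closed_nbhd; nbh | exact Hw']); apply I1 in K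
              | assert (K : Iset C (vx,vy) (a,b)) by (split; [unfold closed_nbhd; nbh | exact Hw']); apply I2 in K ];
        destruct K as [Kn _]; unfold closed_nbhd in Kn; split_nbhd Kn; lia end.
    + specialize (Hx (x,y)) as Hs. unfold sepx, vadd in Hs; simpl in Hs.
      repeat rewrite orb_true_iff in Hs.
      destruct Hs as [[[[[Hw'|Hw']|Hw']|Hw']|Hw']|Hw'];
      match type of Hw' with ?C (?a,?b) = true =>
        destruct (Hiff (a,b)) as [I1 I2];
        first [ assert (K : Iset C (x,y) (a,b)) by (split; [unfold closed_nbhd; nbh | exact Hw']); apply I1 in K
              | assert (K : Iset C (vx,vy) (a,b)) by (split; [unfold closed_nbhd; nbh | exact Hw']); apply I2 in K ];
        destruct K as [Kn _]; unfold closed_nbhd in Kn; split_nbhd Kn; lia end.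
    + specialize (Hy (vx,vy)) as Hs. unfold sepy, vadd in Hs; simpl in Hs.
      repeat rewrite orb_true_iff in Hs.
      destruct Hs as [[[[[Hw'|Hw']|Hw']|Hw']|Hw']|Hw'];
      match type of Hw' with ?C (?a,?b) = true =>
        destruct (Hiff (a,b)) as [I1 I2];
        first [ assert (K : Iset C (x,y) (a,b)) by (split; [unfold closed_nbhd; nbh | exact Hw']); apply I1 in K
              | assert (K : Iset C (vx,vy) (a,b)) by (split; [unfold closed_nbhd; nbh | exact Hw']); apply I2 in K ];
        destruct K as [Kn _]; unfold closed_nbhd in Kn; split_nbhd Kn; lia end.
    + specialize (Hy (x,y)) as Hs. unfold sepy, vadd in Hs; simpl in Hs.
      repeat rewrite orb_true_iff in Hs.
      destruct Hs as [[[[[Hw'|Hw']|Hw']|Hw']|Hw']|Hw'];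
      match type of Hw' with ?C (?a,?b) = true =>
        destruct (Hiff (a,b)) as [I1 I2];
        first [ assert (K : Iset C (x,y) (a,b)) by (split; [unfold closed_nbhd; nbh | exact Hw']); apply I1 in K
              | assert (K : Iset C (vx,vy) (a,b)) by (split; [unfold closed_nbhd; nbh | exact Hw']); apply I2 in K ];
        destruct K as [Kn _]; unfold closed_nbhd in Kn; split_nbhd Kn; lia end.
Qed.

Definition Cstar : code := fun v => Z.ltb ((4 * fst v + snd v) mod 11) 3.

Lemma Cstar_shift x y a b : Cstar (x + a, y + b) = Z.ltb (((4*x+y) mod 11 + (4*a+b)) mod 11) 3.
Proof. unfold Cstar; cbn [fst snd]. rewrite Z.add_mod_idemp_l by lia. f_equal. f_equal. ring. Qed.
Lemma Cstar_0 x y : Cstar (x, y) = Z.ltb (((4*x+y) mod 11 + 0) mod 11) 3.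
Proof. rewrite <- (Z.add_0_r x), <- (Z.add_0_r y) at 1. rewrite Cstar_shift. reflexivity. Qed.

Ltac r11 x y :=
  generalize (Z.mod_pos_bound (4*x+y) 11 eq_refl); generalize ((4*x+y) mod 11);
  let r := fresh in let Hr := fresh in intros r Hr;
  assert (r = 0 \/ r = 1 \/ r = 2 \/ r = 3 \/ r = 4 \/ r = 5 \/ r = 6 \/ r = 7 \/ r = 8 \/ r = 9 \/ r = 10) by lia;
  repeat match goal with H : _ \/ _ |- _ => destruct H end; subst; reflexivity.

Lemma Cstar_lic : local_identifying_code Cstar.
Proof.
  apply lic_of.
  - exists (0,0). reflexivity.
  - intros [x y]. unfold dom, vadd; cbn [fst snd]. rewrite !Cstar_shift, Cstar_0. r11 x y.
  - intros [x y]. unfold sepx, vadd; cbn [fst snd]. rewrite !Cstar_shift. r11 x y.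
  - intros [x y]. unfold sepy, vadd; cbn [fst snd]. rewrite !Cstar_shift. r11 x y.
Qed.


Lemma sumL_scal {A} (f : A->Z) a l : sumL (fun v => a * f v) l = a * sumL f l.
Proof. induction l; simpl; [ring|]. rewrite IHl. ring. Qed.

Definition hh (b : Z) : Z := cZ (Z.ltb (b mod 11) 3).
Fixpoint Sf (a : Z) (n : nat) : Z := match n with O => 0 | S n' => hh a + Sf (a + 1) n' end.

Lemma Sf_seq len : forall s a, sumL (fun k => hh (a + Z.of_nat k)) (seq s len) = Sf (a + Z.of_nat s) len.
Proof. induction len; intros s a; simpl; [reflexivity|]. rewrite IHlen. f_equal. f_equal. lia. Qed.

Lemma Sf_add n : forall k a, Sf a (n + k) = Sf a n + Sf (a + Z.of_nat n) k.
Proof. induction n; intros k a; simpl. { rewrite Z.add_0_r. reflexivity. }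
  rewrite IHn. replace (a + 1 + Z.of_nat n) with (a + Z.pos (Pos.of_succ_nat n)) by lia. ring. Qed.

Lemma Sf_ext n : forall a b, (forall i, hh (a + i) = hh (b + i)) -> Sf a n = Sf b n.
Proof. induction n; intros a b H; simpl; [reflexivity|].
  rewrite <- (Z.add_0_r a), <- (Z.add_0_r b), H at 1. rewrite (Z.add_0_r b). f_equal.
  apply IHn. intro i. rewrite <- !Z.add_assoc. apply H. Qed.

Lemma Sf_11 a : Sf a 11 = 3.
Proof.
  rewrite (Sf_ext 11 a (a mod 11)).
  2:{ intro i. unfold hh. rewrite (Z.add_mod a i), (Z.add_mod (a mod 11) i) by lia. rewrite Z.mod_mod by lia. reflexivity. }
  generalize (Z.mod_pos_bound a 11 eq_refl); generalize (a mod 11);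
  let r := fresh in let Hr := fresh in intros r Hr;
  assert (r = 0 \/ r = 1 \/ r = 2 \/ r = 3 \/ r = 4 \/ r = 5 \/ r = 6 \/ r = 7 \/ r = 8 \/ r = 9 \/ r = 10) by lia;
  repeat match goal with H : _ \/ _ |- _ => destruct H end; subst; reflexivity.
Qed.

Lemma Sf_range n : forall a, 0 <= Sf a n <= Z.of_nat n.
Proof. induction n; intro a; simpl Sf; [simpl; lia|]. specialize (IHn (a+1)).
  assert (0 <= hh a <= 1) by (unfold hh, cZ; destruct (_ <? _); lia). lia. Qed.

Lemma Sf_q q : forall r a, (r < 11)%nat -> -30 <= 11 * Sf a (11 * q + r) - 3 * Z.of_nat (11 * q + r) <= 80.
Proof.
  induction q; intros r a Hr.
  - replace (11 * 0 + r)%nat with r by lia. pose proof (Sf_range r a). lia.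
  - replace (11 * S q + r)%nat with (11 + (11 * q + r))%nat by lia.
    rewrite Sf_add, Sf_11. specialize (IHq r (a + Z.of_nat 11) Hr). lia.
Qed.

Lemma Sf_bound n a : -30 <= 11 * Sf a n - 3 * Z.of_nat n <= 80.
Proof. rewrite (Nat.div_mod n 11) by lia. apply Sf_q. apply Nat.mod_upper_bound. lia. Qed.

Lemma Cstar_count m : Z.abs (11 * Z.of_nat (count_in_Qn Cstar m) - 3 * (LZ m * LZ m)) <= 110 * LZ m.
Proof.
  rewrite count_eq. unfold Qn. rewrite sumL_prod.
  assert (HL : Z.of_nat (length (Zrange m)) = LZ m) by (rewrite Zrange_len; unfold LZ; lia).
  assert (Hrow : forall i, sumL (fun j => cZ (Cstar (i, j))) (Zrange m) = Sf (4 * i - Z.of_nat m) (2*m+1)).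
  { intro i. unfold Zrange. rewrite sumL_map.
    rewrite (sumL_ext _ (fun k => hh (4 * i - Z.of_nat m + Z.of_nat k))).
    - rewrite Sf_seq. f_equal. lia.
    - intro k. unfold hh, Cstar. cbn [fst snd]. f_equal. f_equal. f_equal. lia. }
  rewrite (sumL_ext _ _ _ Hrow).
  assert (E : forall i, -30 <= 11 * Sf (4 * i - Z.of_nat m) (2*m+1) - 3 * LZ m <= 80).
  { intro i. pose proof (Sf_bound (2*m+1) (4 * i - Z.of_nat m)). unfold LZ. lia. }
  assert (U : sumL (fun i => 11 * Sf (4 * i - Z.of_nat m) (2*m+1)) (Zrange m) <= sumL (fun i => 3 * LZ m + 80) (Zrange m))
    by (apply sumL_le; intro i; specialize (E i); lia).
  assert (D : sumL (fun i => 3 * LZ m - 30) (Zrange m) <= sumL (fun i => 11 * Sf (4 * i - Z.of_nat m) (2*m+1)) (Zrange m))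
    by (apply sumL_le; intro i; specialize (E i); lia).
  rewrite !sumL_const, HL in *.
  rewrite sumL_scal in U, D. assert (0 <= LZ m) by (unfold LZ; lia). nia.
Qed.

Open Scope R_scope.

Lemma LZ_pos n : (0 < LZ n)%Z.
Proof. unfold LZ. lia. Qed.

Lemma lim_of_bound (w : nat -> R) l K : 0 <= K ->
  (forall n, Rabs (w n - l) <= K / IZR (LZ n)) -> is_lim_seq w l.
Proof.
  intros HK H. apply is_lim_seq_spec. intro eps.
  destruct (archimed (K / eps)) as [H1 _].
  assert (He : 0 < eps) by apply cond_pos.
  assert (Hk : 0 <= K / eps) by (apply Rdiv_le_0_compat; lra).
  exists (Z.to_nat (up (K / eps))). intros n Hn.
  eapply Rle_lt_trans; [apply H|].
  assert (Hup : (0 <= up (K/eps))%Z) by (apply le_IZR; lra).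
  assert (HL : K / eps < IZR (LZ n)).
  { eapply Rlt_le_trans; [exact H1|]. apply IZR_le. unfold LZ. lia. }
  pose proof (LZ_pos n) as HP. apply IZR_lt in HP.
  apply (Rmult_lt_compat_r eps) in HL; [|lra].
  unfold Rdiv in *. rewrite Rmult_assoc, Rinv_l in HL by lra. rewrite Rmult_1_r in HL.
  apply (Rmult_lt_reg_r (IZR (LZ n))); [lra|]. rewrite Rmult_assoc, Rinv_l by lra. lra.
Qed.

Lemma R_lower (c L K : R) : 0 < L -> 0 <= K -> 3*(L*L) - K*L <= 11*c -> 3/11 - K/L <= c/(L*L).
Proof.
  intros HL HK H.
  assert (E : c / (L*L) - (3/11 - K/L) = (11*c - (3*(L*L) - 11*K*L)) / (11*(L*L))) by (field; lra).
  assert (0 <= (11*c - (3*(L*L) - 11*K*L)) / (11*(L*L))).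
  { apply Rdiv_le_0_compat; [nra|nra]. }
  lra.
Qed.

Lemma R_abs (c L K : R) : 0 < L -> Rabs (11*c - 3*(L*L)) <= K*L -> Rabs (c/(L*L) - 3/11) <= K/L.
Proof.
  intros HL H.
  assert (E : c / (L*L) - 3/11 = (11*c - 3*(L*L)) / (11*(L*L))) by (field; lra).
  rewrite E. unfold Rdiv. rewrite Rabs_mult, Rabs_inv, (Rabs_right (11*(L*L))) by nra.
  apply (Rmult_le_reg_r (11 * (L*L))); [nra|].
  rewrite Rmult_assoc, Rinv_l by nra. rewrite Rmult_1_r.
  assert (K * / L * (11 * (L * L)) = 11 * (K * L)) by (field; lra). rewrite H0.
  pose proof (Rabs_pos (11 * c - 3 * (L * L))). nra.
Qed.

Lemma INR_len n : INR (length (Qn n)) = IZR (LZ n) * IZR (LZ n).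
Proof. rewrite INR_IZR_INZ, lenQ, mult_IZR. reflexivity. Qed.

Theorem mainTheorem13 :
  (forall C : code, local_identifying_code C -> Rbar_le (Finite (3 / 11)) (density C)) /\
  (exists C : code, local_identifying_code C /\ density C = Finite (3 / 11)).
Proof.
  split.
  - intros C HC. unfold density.
    set (v := fun n : nat => 3/11 - 120 / IZR (LZ n)).
    assert (Hv : is_lim_seq v (3/11)).
    { apply (lim_of_bound v (3/11) 120); [lra|]. intro n. unfold v.
      pose proof (LZ_pos n) as HP. apply IZR_lt in HP.
      replace (3 / 11 - 120 / IZR (LZ n) - 3 / 11) with (- (120 / IZR (LZ n))) by ring.
      rewrite Rabs_Ropp, Rabs_right; [lra|]. apply Rle_ge, Rdiv_le_0_compat; lra. }
    rewrite <- (is_LimSup_seq_unique v (3/11) (is_lim_LimSup_seq v (3/11) Hv)).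
    apply LimSup_le. exists 0%nat. intros n _. unfold v.
    rewrite INR_len, INR_IZR_INZ.
    pose proof (LZ_pos n) as HP. apply IZR_lt in HP.
    apply R_lower; [lra|lra|].
    pose proof (lower_count C HC n) as H. apply IZR_le in H.
    rewrite minus_IZR, !mult_IZR in H. exact H.
  - exists Cstar. split; [exact Cstar_lic|]. unfold density.
    apply is_LimSup_seq_unique, is_lim_LimSup_seq.
    apply (lim_of_bound _ _ 110); [lra|]. intro n.
    rewrite INR_len, INR_IZR_INZ.
    pose proof (LZ_pos n) as HP. apply IZR_lt in HP.
    apply R_abs; [lra|].
    pose proof (Cstar_count n) as H. apply IZR_le in H.
    rewrite abs_IZR, minus_IZR, !mult_IZR in H. exact H.
Qed.
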